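(* Let $R$ be a ring with identity and involution $*$, and let $a,b\in R$ with $Ra=Ra^2$. Then the following are equivalent: (1) $a$ is core invertible with core inverse $b$; (2) $aba=a$, $(ab)^*=ab$ and $ab^2=b$.
   Context: An involution on $R$ satisfies $(a^* )^*=a$, $(ab)^*=b^*a^*$, $(a+b)^*=a^*+b^*$. An element $x\in R$ is a core inverse of $a$ if $axa=a$, $xR=aR$ and $Rx=Ra^*$; it is unique when it exists. $Ra=\{ra: r\in R\}$. *)

(* Defs.v *)
From mathcomp Require Import all_boot all_algebra.
Set Implicit Arguments. Unset Strict Implicit. Unset Printing Implicit Defensive.
Import GRing.Theory.
Local Open Scope ring_scope.

Definition involution (R : pzRingType) (star : R -> R) : Prop :=
  [/\ forall a, star (star a) = a,
      forall a b, star (a * b) = star b * star a &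
      forall a b, star (a + b) = star a + star b].

Definition rideal (R : pzRingType) (x : R) : R -> Prop := fun y => exists r, y = x * r.
Definition lideal (R : pzRingType) (x : R) : R -> Prop := fun y => exists r, y = r * x.

Definition seteqR (R : pzRingType) (P Q : R -> Prop) : Prop := forall y, P y <-> Q y.

Definition core_inverse (R : pzRingType) (star : R -> R) (a x : R) : Prop :=
  [/\ a * x * a = a,
      seteqR (rideal x) (rideal a) &
      seteqR (lideal x) (lideal (star a))].

(* Main.v *)
Require Import Defs.
From mathcomp Require Import all_boot all_algebra.
Local Open Scope ring_scope.
Import GRing.Theory.

Theorem theorem3p3 (R : pzRingType) (star : R -> R) (a b : R) :
  involution star ->
  seteqR (lideal a) (lideal (a ^+ 2)) ->
  (core_inverse star a b <->
   [/\ a * b * a = a, star (a * b) = a * b & a * b ^+ 2 = b]).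
Proof.
move=> [sK sM sD] Hl; split.
- move=> [Haba Hr Hl2].
  have [r Hb] : lideal (star a) b by apply/Hl2; exists 1; rewrite mul1r.
  have [s Hs] : rideal a b by apply/Hr; exists 1; rewrite mulr1.
  have Hb2 : b = b * star b * star a.
    by rewrite {1}Hb -{1}Haba sM sM !mulrA -Hb.
  have Hab : a * b = a * b * star (a * b).
    by rewrite {1}Hb2 sM !mulrA.
  split => //.
  + by rewrite {1}Hab sM sK.
  + by rewrite expr2 mulrA [X in _ * X = _]Hs mulrA Haba -Hs.
- move=> [Haba Hh Hb].
  have [r Hr] : lideal (a ^+ 2) a by apply/Hl; exists 1; rewrite mul1r.
  set x := b * a ^+ 2 - a.
  have Hx1 : x = a * b * x.
    have e1 : b * a ^+ 2 = a * b * (b * a ^+ 2).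
      by rewrite {1}(esym Hb) !expr2 !mulrA.
    have e2 : a = a * b * a by rewrite Haba.
    by rewrite /x mulrBr -e1 -e2.
  have Hax : a * x = 0.
    by rewrite /x mulrBr expr2 !mulrA Haba subrr.
  have Habx : a * b * x = 0.
    have e3 : a ^+ 2 * b * x = a * (a * b * x) by rewrite expr2 !mulrA.
    rewrite -Hx1 Hax in e3.
    by rewrite {1}Hr -mulrA -mulrA (mulrA (a ^+ 2)) e3 mulr0.
  have Hba : b * a ^+ 2 = a.
    by apply/eqP; rewrite -subr_eq0 -/x Hx1 Habx.
  have Hbab : b = b * (a * b).
    have e : b * a ^+ 2 * b ^+ 2 = b * (a * (a * b ^+ 2)) by rewrite !expr2 !mulrA.
    by rewrite Hb Hba Hb in e.
  split => //.
  + move=> y; split=> -[t ->].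
    * by exists (b ^+ 2 * t); rewrite -{1}Hb mulrA.
    * by exists (a ^+ 2 * t); rewrite -{1}Hba mulrA.
  + move=> y; split=> -[t ->].
    * exists (t * b * star b); rewrite -!mulrA; congr (_ * _).
      by rewrite -sM Hh -Hbab.
    * exists (t * star a * a); rewrite -!mulrA; congr (_ * _).
      by rewrite -Hh -sM Haba.
Qed.
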